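(* Let $\lambda>0$, let $q:\mathbb{R}\to\mathbb{R}$ be infinitely differentiable and strictly positive, let $x(t)=\int_0^t\sqrt{q(u)}\,du$, and assume $x$ maps $\mathbb{R}$ onto $\mathbb{R}$ (with inverse $t(x)$). Let $p(x)=2\{t,x\}$. Suppose $\sigma\in L^1(\mathbb{R})\cap C(\mathbb{R})$ satisfies $$\sigma(x)=S[T\sigma](x)+p(x)\quad\text{for all }x\in\mathbb{R}.$$ Let $\delta(x)=T\sigma(x)=\frac1{4\lambda}\int_{\mathbb{R}}\sin(2\lambda|x-y|)\sigma(y)\,dy$ and $$\alpha(t)=\lambda\int_0^t\sqrt{q(u)}\exp\!\left(\tfrac{\delta(x(u))}{2}\right)du .$$ Then: (1) $\delta$ is a $C^2$ solution on $\mathbb{R}$ of $\ \delta''(x)-\frac14(\delta'(x))^2+4\lambda^2\left(e^{\delta(x)}-1\right)=p(x)$; (2) the function $\tilde\delta(t)=\delta(x(t))$ is a $C^2$ solution on $\mathbb{R}$ of $$\tilde\delta''(t)-\frac{q'(t)}{2q(t)}\tilde\delta'(t)-\frac14(\tilde\delta'(t))^2+4\lambda^2q(t)\left(e^{\tilde\delta(t)}-1\right)=q(t)\tilde p(t),\qquad \tilde p(t)=\frac{1}{q(t)}\left(\frac54\left(\frac{q'(t)}{q(t)}\right)^2-\frac{q''(t)}{q(t)}\right);$$ (3) $\alpha$ is a $C^3$ solution on $\mathbb{R}$ of Kummer's equation $$(\alpha'(t))^2=\lambda^2q(t)-\frac12\frac{\alpha'''(t)}{\alpha'(t)}+\frac34\left(\frac{\alpha''(t)}{\alpha'(t)}\right)^2;$$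 (4) $\alpha$ is a phase function for $y''(t)+\lambda^2q(t)y(t)=0$ on $[0,1]$.
   Context: The Schwarzian derivative of $f$ with respect to $s$ is $\{f,s\}=\frac{f'''}{f'}-\frac32\left(\frac{f''}{f'}\right)^2$; one has $p(x(t))=\tilde p(t)$. For $f\in C^1(\mathbb{R})$, $S[f](x)=\frac14(f'(x))^2-4\lambda^2\left(e^{f(x)}-1-f(x)\right)$. A sufficiently smooth $\alpha:[0,1]\to\mathbb{R}$ is a phase function for $y''+\lambda^2 q y=0$ on $[0,1]$ if $u=\cos(\alpha)/|\alpha'|^{1/2}$ and $v=\sin(\alpha)/|\alpha'|^{1/2}$ form a basis of the solution space of that equation on $[0,1]$. *)

(* Defs.v *)
From Stdlib Require Import Reals.
Open Scope R_scope.

Definition is_deriv (f f' : R -> R) : Prop :=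
  forall x, derivable_pt_lim f x (f' x).

Definition smooth (f : R -> R) : Prop :=
  exists D : nat -> R -> R, D 0%nat = f /\
    forall n x, derivable_pt_lim (D n) x (D (S n) x).

Definition RInt_val (f : R -> R) (a b v : R) : Prop :=
  exists pr : Riemann_integrable f a b, RiemannInt pr = v.

Definition improper_integral (f : R -> R) (v : R) : Prop :=
  forall eps, eps > 0 -> exists M, forall a b, a <= - M -> M <= b ->
    exists w, RInt_val f a b w /\ Rabs (w - v) < eps.

(* L^1(R) for (continuous) functions: |f| has a convergent improper integral *)
Definition L1 (f : R -> R) : Prop :=
  exists v, improper_integral (fun y => Rabs (f y)) v.

(* Schwarzian derivative {f,s} given f', f'', f''' *)
Definition schwarzian (f1 f2 f3 : R -> R) (s : R) : R :=
  f3 s / f1 s - 3 / 2 * (f2 s / f1 s) ^ 2.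

Definition S_op (lam : R) (f f1 : R -> R) (x : R) : R :=
  1 / 4 * (f1 x) ^ 2 - 4 * lam ^ 2 * (exp (f x) - 1 - f x).

Definition deriv_within (a b : R) (f f' : R -> R) : Prop :=
  forall t, a <= t <= b -> forall eps, eps > 0 -> exists del, del > 0 /\
    forall h, h <> 0 -> Rabs h < del -> a <= t + h <= b ->
      Rabs ((f (t + h) - f t) / h - f' t) < eps.

Definition sol01 (lam : R) (q y : R -> R) : Prop :=
  exists y1 y2, deriv_within 0 1 y y1 /\ deriv_within 0 1 y1 y2 /\
    forall t, 0 <= t <= 1 -> y2 t + lam ^ 2 * q t * y t = 0.

Definition basis01 (lam : R) (q u v : R -> R) : Prop :=
  sol01 lam q u /\ sol01 lam q v /\
  (forall c1 c2, (forall t, 0 <= t <= 1 -> c1 * u t + c2 * v t = 0) ->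
     c1 = 0 /\ c2 = 0) /\
  (forall y, sol01 lam q y -> exists c1 c2,
     forall t, 0 <= t <= 1 -> y t = c1 * u t + c2 * v t).

Definition phase_function (lam : R) (q alpha : R -> R) : Prop :=
  exists a1, is_deriv alpha a1 /\
    basis01 lam q (fun t => cos (alpha t) / sqrt (Rabs (a1 t)))
                  (fun t => sin (alpha t) / sqrt (Rabs (a1 t))).

(* Main.v *)
Require Import Defs.
From Stdlib Require Import Reals Lra Psatz FunctionalExtensionality.
From Coquelicot Require Import Coquelicot.
Import Defs.
Open Scope R_scope.


Lemma D_val f x l l' : derivable_pt_lim f x l -> l = l' -> derivable_pt_lim f x l'.
Proof. intros H ->; exact H. Qed.
Lemma D_ext f g x l : (forall t, f t = g t) -> derivable_pt_lim f x l -> derivable_pt_lim g x l.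
Proof. intros E H eps He. destruct (H eps He) as [d Hd]. exists d. intros h H1 H2.
rewrite <- !E. apply Hd; auto. Qed.
Lemma D_mul f g f' g' x : derivable_pt_lim f x f' -> derivable_pt_lim g x g' ->
  derivable_pt_lim (fun t => f t * g t) x (f' * g x + f x * g').
Proof. intros; apply (derivable_pt_lim_mult f g); auto. Qed.
Lemma D_plus f g f' g' x : derivable_pt_lim f x f' -> derivable_pt_lim g x g' ->
  derivable_pt_lim (fun t => f t + g t) x (f' + g').
Proof. intros; apply (derivable_pt_lim_plus f g); auto. Qed.
Lemma D_minus f g f' g' x : derivable_pt_lim f x f' -> derivable_pt_lim g x g' ->
  derivable_pt_lim (fun t => f t - g t) x (f' - g').
Proof. intros; apply (derivable_pt_lim_minus f g); auto. Qed.
Lemma D_const c x : derivable_pt_lim (fun _ => c) x 0.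
Proof. apply derivable_pt_lim_const. Qed.
Lemma D_id x : derivable_pt_lim (fun t => t) x 1.
Proof. apply derivable_pt_lim_id. Qed.
Lemma D_comp f g f' g' x : derivable_pt_lim f x f' -> derivable_pt_lim g (f x) g' ->
  derivable_pt_lim (fun t => g (f t)) x (g' * f').
Proof. intros; apply (derivable_pt_lim_comp f g); auto. Qed.
Lemma D_exp f f' x : derivable_pt_lim f x f' -> derivable_pt_lim (fun t => exp (f t)) x (exp (f x) * f').
Proof. intros; apply (D_comp f exp); auto. apply derivable_pt_lim_exp. Qed.
Lemma D_sin f f' x : derivable_pt_lim f x f' -> derivable_pt_lim (fun t => sin (f t)) x (cos (f x) * f').
Proof. intros; apply (D_comp f sin); auto. apply derivable_pt_lim_sin. Qed.
Lemma D_cos f f' x : derivable_pt_lim f x f' -> derivable_pt_lim (fun t => cos (f t)) x (- sin (f x) * f').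
Proof. intros; apply (D_comp f cos); auto. apply derivable_pt_lim_cos. Qed.
Lemma D_sqrt f f' x : derivable_pt_lim f x f' -> 0 < f x -> derivable_pt_lim (fun t => sqrt (f t)) x (/ (2 * sqrt (f x)) * f').
Proof. intros; apply (D_comp f sqrt); auto. apply derivable_pt_lim_sqrt; auto. Qed.
Lemma D_inv f f' x : derivable_pt_lim f x f' -> f x <> 0 -> derivable_pt_lim (fun t => / f t) x (- f' / (f x) ^ 2).
Proof. intros. apply is_derive_Reals. apply is_derive_inv; auto. apply is_derive_Reals; auto. Qed.

Lemma C_of_D f x l : derivable_pt_lim f x l -> continuity_pt f x.
Proof. intros H. apply derivable_continuous_pt. exists l; exact H. Qed.
Lemma C_ext f g x : (forall t, f t = g t) -> continuity_pt f x -> continuity_pt g x.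
Proof. intros E H. assert (f = g) as <- by (apply functional_extensionality; auto). auto. Qed.
Lemma C_mul f g x : continuity_pt f x -> continuity_pt g x -> continuity_pt (fun t => f t * g t) x.
Proof. intros; apply (continuity_pt_mult f g); auto. Qed.
Lemma C_plus f g x : continuity_pt f x -> continuity_pt g x -> continuity_pt (fun t => f t + g t) x.
Proof. intros; apply (continuity_pt_plus f g); auto. Qed.
Lemma C_minus f g x : continuity_pt f x -> continuity_pt g x -> continuity_pt (fun t => f t - g t) x.
Proof. intros; apply (continuity_pt_minus f g); auto. Qed.
Lemma C_const c x : continuity_pt (fun _ => c) x.
Proof. apply continuity_pt_const. intros a b; auto. Qed.
Lemma C_id x : continuity_pt (fun t => t) x.
Proof. apply continuity_pt_id. Qed.
Lemma C_comp f g x : continuity_pt f x -> continuity_pt g (f x) -> continuity_pt (fun t => g (f t)) x.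
Proof. intros; apply (continuity_pt_comp f g); auto. Qed.
Lemma C_inv f x : continuity_pt f x -> f x <> 0 -> continuity_pt (fun t => / f t) x.
Proof. intros; apply (continuity_pt_inv f); auto. Qed.
Lemma C_sin f x : continuity_pt f x -> continuity_pt (fun t => sin (f t)) x.
Proof. intros; apply C_comp; auto. apply continuity_sin. Qed.
Lemma C_cos f x : continuity_pt f x -> continuity_pt (fun t => cos (f t)) x.
Proof. intros; apply C_comp; auto. apply continuity_cos. Qed.
Lemma C_exp f x : continuity_pt f x -> continuity_pt (fun t => exp (f t)) x.
Proof. intros; apply C_comp; auto. apply derivable_continuous_pt. apply derivable_pt_exp. Qed.
Lemma C_abs f x : continuity_pt f x -> continuity_pt (fun t => Rabs (f t)) x.
Proof. intros; apply C_comp; auto. apply Rcontinuity_abs. Qed.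
Lemma C_sqrt f x : continuity_pt f x -> 0 <= f x -> continuity_pt (fun t => sqrt (f t)) x.
Proof. intros; apply C_comp; auto. apply continuity_pt_sqrt; auto. Qed.
Lemma C_opp f x : continuity_pt f x -> continuity_pt (fun t => - f t) x.
Proof. intros; apply (continuity_pt_opp f); auto. Qed.
Lemma C_Ropp x : continuity_pt Ropp x.
Proof. apply (C_opp (fun t => t)). apply C_id. Qed.
Ltac cont := repeat first [ apply C_mul | apply C_plus | apply C_minus | apply C_const | apply C_id
  | apply C_sin | apply C_cos | apply C_exp | apply C_abs | apply C_opp | apply C_Ropp ].
Lemma D_opp f f' x : derivable_pt_lim f x f' -> derivable_pt_lim (fun t => - f t) x (- f').
Proof. intros; apply (derivable_pt_lim_opp f); auto. Qed.
Ltac dstep := first [ apply D_const | apply D_id | apply D_mul | apply D_minus | apply D_plus | apply D_opp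
  | apply D_sin | apply D_cos | apply D_exp ].

Lemma C2c f x : continuity_pt f x -> continuous f x.
Proof. intros H. apply continuity_pt_filterlim. exact H. Qed.
Lemma exR f a b : (forall z, continuity_pt f z) -> ex_RInt f a b.
Proof. intros H. apply (ex_RInt_continuous (V := R_CompleteNormedModule)). intros; apply C2c; auto. Qed.
Lemma FTC f x : (forall z, continuity_pt f z) -> derivable_pt_lim (fun t => RInt f 0 t) x (f x).
Proof. intros H. apply is_derive_Reals. apply (is_derive_RInt f (fun t => RInt f 0 t) 0 x).
 - apply filter_forall. intros b. apply (RInt_correct (V := R_CompleteNormedModule)). apply exR; auto.
 - apply C2c; auto. Qed.
Lemma RInt_lin f g k1 k2 a b : (forall z, continuity_pt f z) -> (forall z, continuity_pt g z) ->
  RInt (fun z => k1 * f z + k2 * g z) a b = k1 * RInt f a b + k2 * RInt g a b.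
Proof. intros Hf Hg. apply (is_RInt_unique (V := R_CompleteNormedModule)).
 apply (is_RInt_plus (fun z => k1 * f z) (fun z => k2 * g z)).
 - apply (is_RInt_scal f a b k1). apply (RInt_correct (V := R_CompleteNormedModule)), exR; auto.
 - apply (is_RInt_scal g a b k2). apply (RInt_correct (V := R_CompleteNormedModule)), exR; auto. Qed.
Lemma RIv f a b w : Defs.RInt_val f a b w -> w = RInt f a b.
Proof. intros [pr Hp]. rewrite (RInt_Reals f a b pr). auto. Qed.
Lemma Chas f a b c : (forall z, continuity_pt f z) -> RInt f a b + RInt f b c = RInt f a c.
Proof. intros H. apply (RInt_Chasles f a b c); apply exR; auto. Qed.
Lemma RIext (f g : R -> R) a b : (forall x, Rmin a b < x < Rmax a b -> f x = g x) -> RInt f a b = RInt g a b.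
Proof. apply RInt_ext. Qed.

Lemma glob_within a b f f' : (forall t, derivable_pt_lim f t (f' t)) -> deriv_within a b f f'.
Proof. intros H t _ eps He. destruct (H t eps He) as [d Hd]. exists d. split; [apply cond_pos|].
 intros h H1 H2 _. apply Hd; auto. Qed.

Lemma within_cont a b f f' t : deriv_within a b f f' -> a <= t <= b ->
  forall e, e > 0 -> exists d, d > 0 /\ forall x, a <= x <= b -> Rabs (x - t) < d -> Rabs (f x - f t) < e.
Proof.
 intros H Ht e He. destruct (H t Ht 1 ltac:(lra)) as [d [Hd Hq]].
 set (K := Rabs (f' t) + 1). assert (HK : K > 0) by (unfold K; pose proof (Rabs_pos (f' t)); lra).
 exists (Rmin d (e / K)). split. { apply Rmin_pos; auto. apply Rdiv_lt_0_compat; lra. }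
 intros x Hx Hxt. destruct (Req_dec x t) as [->|Hne].
 { rewrite Rminus_diag, Rabs_R0; lra. }
 assert (Hh : x - t <> 0) by lra.
 specialize (Hq (x - t) Hh).
 replace (t + (x - t)) with x in Hq by ring.
 assert (Hd' : Rabs (x - t) < d) by (eapply Rlt_le_trans; [apply Hxt| apply Rmin_l]).
 specialize (Hq Hd' Hx).
 assert (He' : Rabs (x - t) < e / K) by (eapply Rlt_le_trans; [apply Hxt| apply Rmin_r]).
 assert (Rabs ((f x - f t) / (x - t)) < K).
 { unfold K. pose proof (Rabs_triang ((f x - f t) / (x - t) - f' t) (f' t)).
   replace ((f x - f t) / (x - t) - f' t + f' t) with ((f x - f t) / (x - t)) in H0 by ring. lra. }
 replace (f x - f t) with ((f x - f t) / (x - t) * (x - t)) by (field; auto).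
 rewrite Rabs_mult. pose proof (Rabs_pos ((f x - f t) / (x - t))). pose proof (Rabs_pos (x - t)).
 apply Rmult_lt_compat_r with (r := K) in He'; [|lra].
 replace (e / K * K) with e in He' by (field; lra).
 assert (Rabs (x - t) > 0) by (apply Rabs_pos_lt; auto). nra.
Qed.

Lemma bnd_aux A e eps : eps > 0 -> 0 <= e -> e <= eps / (3 * (Rabs A + 1)) -> Rabs A * e <= eps / 3.
Proof. intros He H0 H1. pose proof (Rabs_pos A).
 assert (eps / (3 * (Rabs A + 1)) * (Rabs A + 1) = eps / 3) by (field; lra).
 assert (Rabs A * e <= Rabs A * (eps / (3 * (Rabs A + 1)))) by (apply Rmult_le_compat_l; lra).
 assert (0 <= eps / (3 * (Rabs A + 1))) by (apply Rlt_le, Rdiv_lt_0_compat; lra). nra. Qed.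

Lemma within_mul a b f f' g g' : deriv_within a b f f' -> deriv_within a b g g' ->
  deriv_within a b (fun t => f t * g t) (fun t => f' t * g t + f t * g' t).
Proof.
 intros Hf Hg t Ht eps He.
 set (A := f' t). set (B := g' t). set (F := f t). set (G := g t).
 pose proof (Rabs_pos A). pose proof (Rabs_pos F). pose proof (Rabs_pos G).
 set (e1 := eps / (3 * (Rabs G + 1))). set (e2 := eps / (3 * (Rabs F + 1))).
 set (e3 := Rmin 1 (eps / (3 * (Rabs A + 1)))).
 assert (He1 : e1 > 0) by (unfold e1; apply Rdiv_lt_0_compat; lra).
 assert (He2 : e2 > 0) by (unfold e2; apply Rdiv_lt_0_compat; lra).
 assert (He3 : e3 > 0) by (unfold e3; apply Rmin_pos; [lra| apply Rdiv_lt_0_compat; lra]).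
 destruct (Hf t Ht e1 He1) as [d1 [Hd1 Q1]].
 destruct (Hg t Ht e2 He2) as [d2 [Hd2 Q2]].
 destruct (within_cont a b g g' t Hg Ht e3 He3) as [d3 [Hd3 C3]].
 exists (Rmin d1 (Rmin d2 d3)). split. { repeat apply Rmin_pos; auto. }
 intros h Hh Hhd Hin.
 assert (h1 : Rabs h < d1) by (eapply Rlt_le_trans; [apply Hhd| apply Rmin_l]).
 assert (h2 : Rabs h < d2) by (eapply Rlt_le_trans; [apply Hhd| eapply Rle_trans; [apply Rmin_r| apply Rmin_l]]).
 assert (h3 : Rabs h < d3) by (eapply Rlt_le_trans; [apply Hhd| eapply Rle_trans; [apply Rmin_r| apply Rmin_r]]).
 specialize (Q1 h Hh h1 Hin). specialize (Q2 h Hh h2 Hin).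
 specialize (C3 (t + h) Hin ltac:(replace (t + h - t) with h by ring; exact h3)).
 fold A in Q1. fold B in Q2. fold F in Q1, Q2. fold G in C3.
 set (X := (f (t + h) - F) / h - A) in *. set (Z := (g (t + h) - G) / h - B) in *.
 set (Y := g (t + h) - G) in *.
 replace ((f (t + h) * g (t + h) - F * G) / h - (A * G + F * B)) with (X * (G + Y) + A * Y + F * Z)
   by (unfold X, Z, Y; field; auto).
 assert (T1 : Rabs X * (Rabs G + 1) < eps / 3).
 { replace (eps / 3) with (e1 * (Rabs G + 1)) by (unfold e1; field; lra).
   apply Rmult_lt_compat_r; lra. }
 assert (T2 : Rabs A * Rabs Y <= eps / 3).
 { apply bnd_aux; auto. apply Rabs_pos. eapply Rle_trans; [apply Rlt_le, C3| apply Rmin_r]. }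
 assert (T3 : Rabs F * Rabs Z <= eps / 3).
 { apply bnd_aux; auto. apply Rabs_pos. apply Rlt_le; auto. }
 assert (Y1 : Rabs Y <= 1) by (eapply Rle_trans; [apply Rlt_le, C3| apply Rmin_l]).
 assert (T4 : Rabs (G + Y) <= Rabs G + 1) by (pose proof (Rabs_triang G Y); lra).
 pose proof (Rabs_pos X).
 assert (T5 : Rabs X * Rabs (G + Y) <= Rabs X * (Rabs G + 1)) by (apply Rmult_le_compat_l; lra).
 eapply Rle_lt_trans. apply Rabs_triang. rewrite Rabs_mult.
 eapply Rle_lt_trans. apply Rplus_le_compat_r. apply Rabs_triang. rewrite !Rabs_mult. lra.
Qed.

Lemma within_lin a b f f' g g' c1 c2 : deriv_within a b f f' -> deriv_within a b g g' ->
  deriv_within a b (fun t => c1 * f t + c2 * g t) (fun t => c1 * f' t + c2 * g' t).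
Proof.
 intros Hf Hg t Ht eps He.
 set (K := Rabs c1 + Rabs c2 + 1). assert (HK : K > 0) by (unfold K; pose proof (Rabs_pos c1); pose proof (Rabs_pos c2); lra).
 destruct (Hf t Ht (eps / K) ltac:(apply Rdiv_lt_0_compat; lra)) as [d1 [Hd1 Q1]].
 destruct (Hg t Ht (eps / K) ltac:(apply Rdiv_lt_0_compat; lra)) as [d2 [Hd2 Q2]].
 exists (Rmin d1 d2). split. { apply Rmin_pos; auto. }
 intros h Hh Hhd Hin.
 specialize (Q1 h Hh ltac:(eapply Rlt_le_trans; [apply Hhd| apply Rmin_l]) Hin).
 specialize (Q2 h Hh ltac:(eapply Rlt_le_trans; [apply Hhd| apply Rmin_r]) Hin).
 replace ((c1 * f (t + h) + c2 * g (t + h) - (c1 * f t + c2 * g t)) / h - (c1 * f' t + c2 * g' t))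
   with (c1 * ((f (t + h) - f t) / h - f' t) + c2 * ((g (t + h) - g t) / h - g' t)) by (field; auto).
 eapply Rle_lt_trans. apply Rabs_triang. rewrite !Rabs_mult.
 pose proof (Rabs_pos c1). pose proof (Rabs_pos c2).
 assert (Rabs c1 * Rabs ((f (t + h) - f t) / h - f' t) <= Rabs c1 * (eps / K)) by (apply Rmult_le_compat_l; lra).
 assert (Rabs c2 * Rabs ((g (t + h) - g t) / h - g' t) <= Rabs c2 * (eps / K)) by (apply Rmult_le_compat_l; lra).
 assert ((Rabs c1 + Rabs c2) * (eps / K) < eps).
 { replace eps with (K * (eps / K)) at 2 by (field; lra). apply Rmult_lt_compat_r.
   apply Rdiv_lt_0_compat; lra. unfold K; lra. }
 lra.
Qed.

Definition clamp (a b x : R) := Rmax a (Rmin b x).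
Lemma clamp_in a b x : a <= b -> a <= clamp a b x <= b.
Proof. intros; unfold clamp, Rmax, Rmin; repeat destruct Rle_dec; lra. Qed.
Lemma clamp_id a b x : a <= x <= b -> clamp a b x = x.
Proof. intros; unfold clamp, Rmax, Rmin; repeat destruct Rle_dec; lra. Qed.
Lemma clamp_lip a b x y : a <= b -> Rabs (clamp a b x - clamp a b y) <= Rabs (x - y).
Proof. intros; unfold clamp, Rmax, Rmin; repeat destruct Rle_dec; split_Rabs; lra. Qed.

Lemma within_const a b f f' : a < b -> deriv_within a b f f' -> (forall t, a <= t <= b -> f' t = 0) ->
  forall t, a <= t <= b -> f t = f a.
Proof.
 intros Hab Hf H0.
 set (g := fun x => f (clamp a b x)).
 assert (Dg : forall x, a < x < b -> derivable_pt_lim g x 0).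
 { intros x Hx eps He. destruct (Hf x ltac:(lra) eps He) as [d [Hd Hq]].
   assert (Hp : Rmin d (Rmin (x - a) (b - x)) > 0) by (repeat apply Rmin_pos; lra).
   exists (mkposreal _ Hp). intros h Hh Hhd. simpl in Hhd.
   assert (Rabs h < d) by (eapply Rlt_le_trans; [apply Hhd| apply Rmin_l]).
   assert (Rabs h < x - a) by (eapply Rlt_le_trans; [apply Hhd| eapply Rle_trans; [apply Rmin_r| apply Rmin_l]]).
   assert (Rabs h < b - x) by (eapply Rlt_le_trans; [apply Hhd| eapply Rle_trans; [apply Rmin_r| apply Rmin_r]]).
   assert (a <= x + h <= b) by (split_Rabs; lra).
   unfold g. rewrite !clamp_id by lra.
   rewrite <- (H0 x) by lra. apply Hq; auto. }
 assert (Cg : forall x, continuity_pt g x).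
 { intros x. unfold continuity_pt, continue_in, limit1_in, limit_in. intros eps He.
   pose proof (clamp_in a b x ltac:(lra)) as Hc.
   destruct (within_cont a b f f' (clamp a b x) Hf Hc eps He) as [d [Hd Hc2]].
   exists d. split; auto. intros y [_ Hy]. simpl in *. unfold R_dist in *. unfold g.
   apply Hc2. apply clamp_in; lra. eapply Rle_lt_trans. apply clamp_lip; lra. auto. }
 pose proof (null_derivative_loc g a b (fun x P => exist _ 0 (Dg x P)) (fun x _ => Cg x)
   (fun x P => eq_refl)) as Hn.
 intros t Ht. specialize (Hn t Ht). unfold g in Hn. rewrite !clamp_id in Hn by lra. auto.
Qed.

Lemma within_vanish f f' : deriv_within 0 1 f f' -> (forall t, 0 <= t <= 1 -> f t = 0) ->
  forall t, 0 <= t <= 1 -> f' t = 0.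
Proof.
 intros Hf H0 t Ht.
 destruct (Req_dec (f' t) 0) as [|Hn]; auto. exfalso.
 assert (He : Rabs (f' t) > 0) by (apply Rabs_pos_lt; auto).
 destruct (Hf t Ht _ He) as [d [Hd Hq]].
 set (h0 := Rmin d 1 / 2).
 assert (Hh0 : 0 < h0 < d /\ h0 <= 1/2) by (unfold h0; pose proof (Rmin_l d 1); pose proof (Rmin_r d 1);
    assert (Rmin d 1 > 0) by (apply Rmin_pos; lra); lra).
 destruct (Rle_dec t (1/2)).
 - specialize (Hq h0 ltac:(lra) ltac:(rewrite Rabs_right; lra) ltac:(lra)).
   rewrite !H0 in Hq by lra. replace ((0 - 0) / h0 - f' t) with (- f' t) in Hq by (field; lra).
   rewrite Rabs_Ropp in Hq. lra.
 - specialize (Hq (- h0) ltac:(lra) ltac:(rewrite Rabs_left; lra) ltac:(lra)).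
   rewrite !H0 in Hq by lra. replace ((0 - 0) / - h0 - f' t) with (- f' t) in Hq by (field; lra).
   rewrite Rabs_Ropp in Hq. lra.
Qed.

Lemma split_fin lam sigma y a b : lam > 0 -> continuity sigma -> a <= y <= b ->
 4*lam * RInt (fun z => 1 / (4 * lam) * sin (2 * lam * Rabs (y - z)) * sigma z) a b =
 sin (2*lam*y) * (2 * RInt (fun z => cos (2*lam*z) * sigma z) 0 y
     + RInt (fun z => cos (2*lam*z) * sigma z) a 0 - RInt (fun z => cos (2*lam*z) * sigma z) 0 b)
 - cos (2*lam*y) * (2 * RInt (fun z => sin (2*lam*z) * sigma z) 0 y
     + RInt (fun z => sin (2*lam*z) * sigma z) a 0 - RInt (fun z => sin (2*lam*z) * sigma z) 0 b).
Proof.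
 intros Hl Hs Hy.
 assert (Cc : forall z, continuity_pt (fun z => cos (2*lam*z) * sigma z) z) by (intros; cont; try apply Hs).
 assert (Cs : forall z, continuity_pt (fun z => sin (2*lam*z) * sigma z) z) by (intros; cont; try apply Hs).
 assert (Cg : forall z, continuity_pt (fun z => 1 / (4 * lam) * sin (2 * lam * Rabs (y - z)) * sigma z) z)
   by (intros; cont; try apply Hs).
 rewrite <- (Chas _ a y b Cg).
 rewrite (RIext _ (fun z => (/(4*lam)*sin(2*lam*y)) * (cos (2*lam*z) * sigma z)
        + (-(/(4*lam))*cos(2*lam*y)) * (sin (2*lam*z) * sigma z)) a y).
 2:{ intros z [_ Hz]. rewrite Rmax_right in Hz by lra. rewrite Rabs_right by lra.
     replace (2*lam*(y-z)) with (2*lam*y - 2*lam*z) by ring. rewrite sin_minus. field. lra. }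
 rewrite (RIext _ (fun z => (-(/(4*lam))*sin(2*lam*y)) * (cos (2*lam*z) * sigma z)
        + ((/(4*lam))*cos(2*lam*y)) * (sin (2*lam*z) * sigma z)) y b).
 2:{ intros z [Hz _]. rewrite Rmin_left in Hz by lra. rewrite Rabs_left by lra.
     replace (2*lam*-(y-z)) with (2*lam*z - 2*lam*y) by ring. rewrite sin_minus. field. lra. }
 rewrite !RInt_lin by auto.
 rewrite <- (Chas _ a 0 y Cc), <- (Chas _ a 0 y Cs).
 rewrite <- (Chas _ 0 y b Cc), <- (Chas _ 0 y b Cs).
 field. lra.
Qed.

Lemma eps_zero D : (forall eps, eps > 0 -> Rabs D < eps) -> D = 0.
Proof. intros H. destruct (Req_dec D 0) as [|Hn]; auto.
 assert (Rabs D > 0) by (apply Rabs_pos_lt; auto). specialize (H _ H0). lra. Qed.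

Lemma abs_bnd3 a b d s c e : Rabs s <= 1 -> Rabs c <= 1 -> Rabs a < e -> Rabs b < e -> Rabs d < e ->
  Rabs (a - s * b - c * d) < 3 * e.
Proof. intros Hs Hc Ha Hb Hd.
 assert (Rabs (s*b) <= Rabs b) by (rewrite Rabs_mult; pose proof (Rabs_pos b); nra).
 assert (Rabs (c*d) <= Rabs d) by (rewrite Rabs_mult; pose proof (Rabs_pos d); nra).
 unfold Rminus. eapply Rle_lt_trans. apply Rabs_triang. rewrite Rabs_Ropp.
 eapply Rle_lt_trans. apply Rplus_le_compat_r. apply Rabs_triang. rewrite Rabs_Ropp. lra. Qed.

Lemma sin_abs1 x : Rabs (sin x) <= 1.
Proof. pose proof (SIN_bound x). apply Rabs_le; lra. Qed.
Lemma cos_abs1 x : Rabs (cos x) <= 1.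
Proof. pose proof (COS_bound x). apply Rabs_le; lra. Qed.

Lemma delta_formula lam sigma delta : lam > 0 -> continuity sigma ->
 (forall y, improper_integral (fun z => 1 / (4 * lam) * sin (2 * lam * Rabs (y - z)) * sigma z) (delta y)) ->
 exists K1 K2, forall y, 4*lam*delta y =
   2*sin(2*lam*y)*RInt (fun z => cos (2*lam*z) * sigma z) 0 y
 - 2*cos(2*lam*y)*RInt (fun z => sin (2*lam*z) * sigma z) 0 y
 + K1*sin(2*lam*y) + K2*cos(2*lam*y).
Proof.
 intros Hl Hs Hd.
 set (P := fun y => RInt (fun z => cos (2*lam*z) * sigma z) 0 y).
 set (Q := fun y => RInt (fun z => sin (2*lam*z) * sigma z) 0 y).
 set (y1 := PI/(4*lam)).
 assert (E1 : 2*lam*y1 = PI/2) by (unfold y1; field; lra).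
 assert (S1 : sin (2*lam*y1) = 1) by (rewrite E1; apply sin_PI2).
 assert (C1 : cos (2*lam*y1) = 0) by (rewrite E1; apply cos_PI2).
 assert (S0 : sin (2*lam*0) = 0) by (rewrite Rmult_0_r; apply sin_0).
 assert (C0 : cos (2*lam*0) = 1) by (rewrite Rmult_0_r; apply cos_0).
 assert (P0 : P 0 = 0) by (unfold P; apply (RInt_point (V := R_CompleteNormedModule))).
 assert (Q0 : Q 0 = 0) by (unfold Q; apply (RInt_point (V := R_CompleteNormedModule))).
 exists (4*lam*delta y1 - 2 * P y1), (4*lam*delta 0).
 intros y. fold (P y) (Q y).
 apply Rminus_diag_uniq. apply eps_zero. intros eps He.
 set (e' := eps / (12*lam)).
 assert (He' : e' > 0) by (unfold e'; apply Rdiv_lt_0_compat; lra).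
 destruct (Hd y e' He') as [M1 H1].
 destruct (Hd 0 e' He') as [M2 H2].
 destruct (Hd y1 e' He') as [M3 H3].
 set (N := Rabs M1 + Rabs M2 + Rabs M3 + Rabs y + Rabs y1 + 1).
 pose proof (Rle_abs M1). pose proof (Rle_abs M2). pose proof (Rle_abs M3).
 pose proof (Rle_abs y). pose proof (Rle_abs y1).
 pose proof (Rle_abs (-y)). pose proof (Rle_abs (-y1)). rewrite Rabs_Ropp in *.
 pose proof (Rabs_pos M1). pose proof (Rabs_pos M2). pose proof (Rabs_pos M3).
 pose proof (Rabs_pos y). pose proof (Rabs_pos y1).
 destruct (H1 (-N) N) as [w1 [Hw1 Hb1]]; [unfold N; lra | unfold N; lra |].
 destruct (H2 (-N) N) as [w2 [Hw2 Hb2]]; [unfold N; lra | unfold N; lra |].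
 destruct (H3 (-N) N) as [w3 [Hw3 Hb3]]; [unfold N; lra | unfold N; lra |].
 apply RIv in Hw1. apply RIv in Hw2. apply RIv in Hw3.
 pose proof (split_fin lam sigma y (-N) N Hl Hs) as F1.
 pose proof (split_fin lam sigma 0 (-N) N Hl Hs) as F2.
 pose proof (split_fin lam sigma y1 (-N) N Hl Hs) as F3.
 rewrite <- Hw1 in F1. rewrite <- Hw2 in F2. rewrite <- Hw3 in F3.
 fold (P y) (Q y) (P 0) (Q 0) (P y1) (Q y1) in F1, F2, F3.
 rewrite S0, C0, P0, Q0 in F2. rewrite S1, C1 in F3.
 specialize (F1 ltac:(unfold N; lra)). specialize (F2 ltac:(unfold N; lra)). specialize (F3 ltac:(unfold N; lra)).
 set (ca := RInt (fun z => cos (2*lam*z) * sigma z) (-N) 0) in *.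
 set (cb := RInt (fun z => cos (2*lam*z) * sigma z) 0 N) in *.
 set (sa := RInt (fun z => sin (2*lam*z) * sigma z) (-N) 0) in *.
 set (sb := RInt (fun z => sin (2*lam*z) * sigma z) 0 N) in *.
 set (s := sin (2*lam*y)) in *. set (c := cos (2*lam*y)) in *.
 assert (X : 4 * lam * delta y - (2 * s * P y - 2 * c * Q y + (4 * lam * delta y1 - 2 * P y1) * s +
    4 * lam * delta 0 * c) = 4*lam*((delta y - w1) - s * (delta y1 - w3) - c * (delta 0 - w2))
    + (4*lam*w1 - (s * (2 * P y + ca - cb) - c * (2 * Q y + sa - sb)))
    - s * (4*lam*w3 - (1 * (2 * P y1 + ca - cb) - 0 * (2 * Q y1 + sa - sb)))
    - c * (4*lam*w2 - (0 * (2 * 0 + ca - cb) - 1 * (2 * 0 + sa - sb)))) by ring.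
 rewrite X, F1, F2, F3. clear X.
 replace (4 * lam * (delta y - w1 - s * (delta y1 - w3) - c * (delta 0 - w2)) +
  (s * (2 * P y + ca - cb) - c * (2 * Q y + sa - sb) - (s * (2 * P y + ca - cb) - c * (2 * Q y + sa - sb))) -
  s * (1 * (2 * P y1 + ca - cb) - 0 * (2 * Q y1 + sa - sb) - (1 * (2 * P y1 + ca - cb) - 0 * (2 * Q y1 + sa - sb))) -
  c * (0 * (2 * 0 + ca - cb) - 1 * (2 * 0 + sa - sb) - (0 * (2 * 0 + ca - cb) - 1 * (2 * 0 + sa - sb))))
  with (4 * lam * (delta y - w1 - s * (delta y1 - w3) - c * (delta 0 - w2))) by ring.
 rewrite Rabs_mult, (Rabs_right (4*lam)) by lra.
 assert (HB : Rabs (delta y - w1 - s * (delta y1 - w3) - c * (delta 0 - w2)) < 3 * e').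
 { apply abs_bnd3; [apply sin_abs1|apply cos_abs1|..];
   rewrite Rabs_minus_sym; auto. }
 unfold e' in HB. replace eps with (4*lam * (3 * (eps / (12*lam)))) by (field; lra).
 apply Rmult_lt_compat_l; lra.
Qed.

Lemma part1 lam sigma delta delta1 : lam > 0 -> continuity sigma ->
 (forall y, improper_integral (fun z => 1 / (4 * lam) * sin (2 * lam * Rabs (y - z)) * sigma z) (delta y)) ->
 Defs.is_deriv delta delta1 ->
 Defs.is_deriv delta1 (fun y => sigma y - 4 * lam ^ 2 * delta y).
Proof.
 intros Hl Hs Hd Hd1.
 destruct (delta_formula lam sigma delta Hl Hs Hd) as [K1 [K2 F]].
 set (P := fun y => RInt (fun z => cos (2*lam*z) * sigma z) 0 y) in F.
 set (Q := fun y => RInt (fun z => sin (2*lam*z) * sigma z) 0 y) in F.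
 assert (Cc : forall z, continuity_pt (fun z => cos (2*lam*z) * sigma z) z) by (intros; cont; try apply Hs).
 assert (Cs : forall z, continuity_pt (fun z => sin (2*lam*z) * sigma z) z) by (intros; cont; try apply Hs).
 assert (DP : forall y, derivable_pt_lim P y (cos (2*lam*y) * sigma y)) by (intros; apply (FTC _ y Cc)).
 assert (DQ : forall y, derivable_pt_lim Q y (sin (2*lam*y) * sigma y)) by (intros; apply (FTC _ y Cs)).
 assert (Fd : forall y, delta y = / (4*lam) * (2*sin(2*lam*y)*P y - 2*cos(2*lam*y)*Q y + K1*sin(2*lam*y) + K2*cos(2*lam*y))).
 { intros y. rewrite <- F. field. lra. }
 assert (F1 : forall y, delta1 y = cos(2*lam*y) * P y + sin(2*lam*y) * Q y + (K1 * cos(2*lam*y) - K2 * sin(2*lam*y))/2).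
 { intros y. apply (uniqueness_limite delta y). apply Hd1.
   apply (D_ext (fun t => / (4*lam) * (2*sin(2*lam*t)*P t - 2*cos(2*lam*t)*Q t + K1*sin(2*lam*t) + K2*cos(2*lam*t)))).
   { intros; symmetry; apply Fd. }
   eapply D_val. { repeat (first [dstep | apply DP | apply DQ]). }
   cbv beta. field. lra. }
 intros y.
 apply (D_ext (fun t => cos(2*lam*t) * P t + sin(2*lam*t) * Q t + (K1 * cos(2*lam*t) - K2 * sin(2*lam*t))/2)).
 { intros; symmetry; apply F1. }
 eapply D_val. { unfold Rdiv. repeat (first [dstep | apply DP | apply DQ]). }
 cbv beta. rewrite Fd. pose proof (sin2_cos2 (2*lam*y)). unfold Rsqr in H.
 match goal with |- ?A = ?B => assert (Hz : A - B = sigma y * (sin (2*lam*y) * sin (2*lam*y) + cos (2*lam*y) * cos (2*lam*y) - 1)) by (field; lra) end.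
 rewrite H in Hz. lra.
Qed.

Lemma q2cont q q1 q2 : Defs.smooth q -> Defs.is_deriv q q1 -> Defs.is_deriv q1 q2 -> continuity q2.
Proof.
 intros [D [D0 HD]] H1 H2.
 assert (E1 : forall x, D 1%nat x = q1 x).
 { intros x. apply (uniqueness_limite q x). rewrite <- D0. apply HD. apply H1. }
 assert (E1f : D 1%nat = q1) by (apply functional_extensionality; auto).
 assert (E2 : forall x, D 2%nat x = q2 x).
 { intros x. apply (uniqueness_limite q1 x). rewrite <- E1f. apply HD. apply H2. }
 intros x. apply (C_ext (D 2%nat)); auto. apply (C_of_D _ _ (D 3%nat x)). apply HD.
Qed.

Lemma qfacts q q1 q2 xf tinv t1 t2 t3 : (forall t, q t > 0) -> Defs.is_deriv q q1 -> Defs.is_deriv q1 q2 ->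
 (forall t, Defs.RInt_val (fun u => sqrt (q u)) 0 t (xf t)) -> (forall t, tinv (xf t) = t) ->
 Defs.is_deriv tinv t1 -> Defs.is_deriv t1 t2 -> Defs.is_deriv t2 t3 ->
 (forall t, derivable_pt_lim xf t (sqrt (q t))) /\
 (forall t, 2 * schwarzian t1 t2 t3 (xf t) = 1 / q t * (5/4*(q1 t/q t)^2 - q2 t/q t)).
Proof.
 intros Hp Hq1 Hq2 Hx Htx Ht1 Ht2 Ht3. assert (Hp0 : forall t, 0 < q t) by (intros; apply Hp).
 assert (Cq : forall t, continuity_pt q t) by (intros; apply (C_of_D _ _ _ (Hq1 t))).
 assert (Dx : forall t, derivable_pt_lim xf t (sqrt (q t))).
 { intros t. apply (D_ext (fun t => RInt (fun u => sqrt (q u)) 0 t)).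
   { intros; symmetry; apply RIv; auto. }
   apply (FTC (fun u => sqrt (q u))). intros; apply C_sqrt; auto. left; apply Hp. }
 split; auto.
 intros t.
 assert (Sp : forall t, 0 < sqrt (q t)) by (intros; apply sqrt_lt_R0; apply Hp).
 assert (Ss : forall t, sqrt (q t) * sqrt (q t) = q t) by (intros; apply sqrt_sqrt; left; apply Hp).
 assert (R1 : forall t, t1 (xf t) = / sqrt (q t)).
 { intros u. assert (t1 (xf u) * sqrt (q u) = 1).
   { apply (uniqueness_limite (fun t => tinv (xf t)) u).
     - apply D_comp; auto.
     - apply (D_ext (fun t => t)). { intros; rewrite Htx; auto. } apply D_id. }
   specialize (Sp u). apply (Rmult_eq_reg_r (sqrt (q u))); [rewrite H; field; lra | lra]. }
 assert (DS : forall u, derivable_pt_lim (fun t => sqrt (q t)) u (/ (2 * sqrt (q u)) * q1 u)).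
 { intros u. apply D_sqrt; auto. }
 assert (R2 : forall t, t2 (xf t) = - q1 t / (2 * q t ^ 2)).
 { intros u. assert (t2 (xf u) * sqrt (q u) = - (/ (2 * sqrt (q u)) * q1 u) / (sqrt (q u)) ^ 2).
   { apply (uniqueness_limite (fun t => t1 (xf t)) u).
     - apply D_comp; auto.
     - apply (D_ext (fun t => / sqrt (q t))). { intros; rewrite R1; auto. }
       apply (D_inv (fun t => sqrt (q t))). apply DS. specialize (Sp u); lra. }
   specialize (Sp u). specialize (Ss u). rewrite <- Ss.
   apply (Rmult_eq_reg_r (sqrt (q u))); [|lra]. rewrite H. field. lra. }
 assert (DQ : forall u, derivable_pt_lim (fun t => - q1 t / (2 * q t ^ 2)) u
     (- q2 u / (2 * q u ^ 2) + q1 u * q1 u / (q u ^ 3))).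
 { intros u. apply (D_ext (fun t => - q1 t * / (2 * (q t * q t)))).
   { intros; unfold Rdiv; f_equal; f_equal; ring. }
   eapply D_val. { apply D_mul. apply D_opp. apply Hq2. apply D_inv.
     apply D_mul. apply D_const. apply D_mul; apply Hq1. specialize (Hp u). nra. }
   specialize (Hp u). cbv beta. field. lra. }
 assert (R3 : t3 (xf t) * sqrt (q t) = - q2 t / (2 * q t ^ 2) + q1 t * q1 t / (q t ^ 3)).
 { apply (uniqueness_limite (fun t => t2 (xf t)) t).
   - apply D_comp; auto.
   - apply (D_ext (fun t => - q1 t / (2 * q t ^ 2))). { intros; rewrite R2; auto. } apply DQ. }
 unfold schwarzian. rewrite R1, R2.
 assert (T3 : t3 (xf t) = (- q2 t / (2 * q t ^ 2) + q1 t * q1 t / (q t ^ 3)) / sqrt (q t)).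
 { rewrite <- R3. field. specialize (Sp t). lra. }
 rewrite T3. specialize (Sp t). specialize (Ss t). set (s := sqrt (q t)) in *. rewrite <- Ss. field. lra.
Qed.

Lemma phase_generic lam q alpha a1 a2 a3 :
 (forall t, derivable_pt_lim alpha t (a1 t)) -> (forall t, derivable_pt_lim a1 t (a2 t)) ->
 (forall t, derivable_pt_lim a2 t (a3 t)) -> (forall t, a1 t > 0) ->
 (forall t, (a1 t)^2 = lam^2 * q t - 1/2 * (a3 t / a1 t) + 3/4 * (a2 t / a1 t)^2) ->
 phase_function lam q alpha.
Proof.
 intros Ha1 Ha2 Ha3 Hpos Hk.
 exists a1. split; [exact Ha1|].
 assert (K : forall t, lam^2 * q t = (a1 t)^2 + 1/2 * (a3 t / a1 t) - 3/4 * (a2 t / a1 t)^2)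
   by (intros t; rewrite Hk; ring).
 assert (Wp : forall t, 0 < sqrt (a1 t)) by (intros; apply sqrt_lt_R0; apply Hpos).
 assert (Ws : forall t, sqrt (a1 t) * sqrt (a1 t) = a1 t) by (intros; apply sqrt_sqrt; left; apply Hpos).
 set (m := fun t => / sqrt (a1 t)).
 set (m1 := fun t => - a2 t * / (2 * (sqrt (a1 t) * sqrt (a1 t) * sqrt (a1 t)))).
 set (m2 := fun t => - a3 t * / (2 * (sqrt (a1 t) * sqrt (a1 t) * sqrt (a1 t)))
     + 3 * a2 t * a2 t * / (4 * (sqrt (a1 t) * sqrt (a1 t) * sqrt (a1 t) * sqrt (a1 t) * sqrt (a1 t)))).
 assert (DW : forall t, derivable_pt_lim (fun t => sqrt (a1 t)) t (/ (2 * sqrt (a1 t)) * a2 t))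
   by (intros; apply D_sqrt; auto; apply Hpos).
 assert (Dm : forall t, derivable_pt_lim m t (m1 t)).
 { intros t. unfold m, m1. eapply D_val. { apply (D_inv (fun t => sqrt (a1 t))). apply DW. specialize (Wp t); lra. }
   specialize (Wp t). field. lra. }
 assert (Dm1 : forall t, derivable_pt_lim m1 t (m2 t)).
 { intros t. unfold m1, m2. eapply D_val.
   { apply D_mul. apply D_opp. apply Ha3. apply (D_inv (fun t => 2 * (sqrt (a1 t) * sqrt (a1 t) * sqrt (a1 t)))).
     repeat (first [dstep | apply DW]). specialize (Wp t). apply Rgt_not_eq. 
     apply Rmult_gt_0_compat; [lra|]. repeat apply Rmult_gt_0_compat; lra. }
   cbv beta. specialize (Wp t). specialize (Ws t). set (w := sqrt (a1 t)) in *. try rewrite <- Ws. field. lra. }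
 set (U := fun t => cos (alpha t) * m t).
 set (V := fun t => sin (alpha t) * m t).
 set (u1 := fun t => - sin (alpha t) * a1 t * m t + cos (alpha t) * m1 t).
 set (v1 := fun t => cos (alpha t) * a1 t * m t + sin (alpha t) * m1 t).
 set (u2 := fun t => - cos (alpha t) * a1 t * a1 t * m t - sin (alpha t) * a2 t * m t
     - sin (alpha t) * a1 t * m1 t - sin (alpha t) * a1 t * m1 t + cos (alpha t) * m2 t).
 set (v2 := fun t => - sin (alpha t) * a1 t * a1 t * m t + cos (alpha t) * a2 t * m t
     + cos (alpha t) * a1 t * m1 t + cos (alpha t) * a1 t * m1 t + sin (alpha t) * m2 t).
 assert (DU : forall t, derivable_pt_lim U t (u1 t)).
 { intros t. unfold U, u1. eapply D_val. { apply D_mul. apply D_cos. apply Ha1. apply Dm. } cbv beta. ring. }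
 assert (DV : forall t, derivable_pt_lim V t (v1 t)).
 { intros t. unfold V, v1. eapply D_val. { apply D_mul. apply D_sin. apply Ha1. apply Dm. } cbv beta. ring. }
 assert (DU1 : forall t, derivable_pt_lim u1 t (u2 t)).
 { intros t. unfold u1, u2. eapply D_val. { repeat (first [apply Dm | apply Dm1 | dstep | apply Ha1 | apply Ha2 | apply Ha3]). }
   cbv beta. ring. }
 assert (DV1 : forall t, derivable_pt_lim v1 t (v2 t)).
 { intros t. unfold v1, v2. eapply D_val. { repeat (first [apply Dm | apply Dm1 | dstep | apply Ha1 | apply Ha2 | apply Ha3]). }
   cbv beta. ring. }
 assert (EU : forall t, u2 t + lam ^ 2 * q t * U t = 0).
 { intros t. rewrite K. unfold u2, U, m, m1, m2. specialize (Wp t). specialize (Ws t). specialize (Hpos t).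
   set (w := sqrt (a1 t)) in *. try rewrite <- Ws. field. lra. }
 assert (EV : forall t, v2 t + lam ^ 2 * q t * V t = 0).
 { intros t. rewrite K. unfold v2, V, m, m1, m2. specialize (Wp t). specialize (Ws t). specialize (Hpos t).
   set (w := sqrt (a1 t)) in *. try rewrite <- Ws. field. lra. }
 assert (WR : forall t, U t * v1 t - u1 t * V t = 1).
 { intros t. unfold U, V, u1, v1, m. specialize (Wp t). specialize (Ws t).
   pose proof (sin2_cos2 (alpha t)). unfold Rsqr in H.
   set (w := sqrt (a1 t)) in *. try rewrite <- Ws.
   match goal with |- ?A = ?B => assert (Hz : A - B = (sin (alpha t) * sin (alpha t) + cos (alpha t) * cos (alpha t) - 1))
     by (field; lra) end. lra. }
 assert (EqU : (fun t => cos (alpha t) / sqrt (Rabs (a1 t))) = U).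
 { apply functional_extensionality. intros t. unfold U, m. rewrite Rabs_right by (left; apply Hpos). reflexivity. }
 assert (EqV : (fun t => sin (alpha t) / sqrt (Rabs (a1 t))) = V).
 { apply functional_extensionality. intros t. unfold V, m. rewrite Rabs_right by (left; apply Hpos). reflexivity. }
 rewrite EqU, EqV. clear EqU EqV.
 split; [|split; [|split]].
 - exists u1, u2. split; [apply glob_within; auto|split; [apply glob_within; auto|]]. intros; apply EU.
 - exists v1, v2. split; [apply glob_within; auto|split; [apply glob_within; auto|]]. intros; apply EV.
 - intros c1 c2 H0.
   assert (Hw : deriv_within 0 1 (fun t => c1 * U t + c2 * V t) (fun t => c1 * u1 t + c2 * v1 t)).
   { apply within_lin; apply glob_within; auto. }
   pose proof (within_vanish _ _ Hw H0 0 ltac:(lra)) as H1. specialize (H0 0 ltac:(lra)).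
   specialize (WR 0). cbv beta in H1.
   split.
   + assert (c1 = v1 0 * (c1 * U 0 + c2 * V 0) - V 0 * (c1 * u1 0 + c2 * v1 0)).
     { rewrite <- (Rmult_1_r c1) at 1. rewrite <- WR. ring. }
     rewrite H0, H1 in H. lra.
   + assert (c2 = - u1 0 * (c1 * U 0 + c2 * V 0) + U 0 * (c1 * u1 0 + c2 * v1 0)).
     { rewrite <- (Rmult_1_r c2) at 1. rewrite <- WR. ring. }
     rewrite H0, H1 in H. lra.
 - intros y [y1 [y2 [Hy1 [Hy2 Hye]]]].
   assert (DW1 : deriv_within 0 1 (fun t => 1 * (y t * v1 t) + -1 * (y1 t * V t))
      (fun t => 1 * (y1 t * v1 t + y t * v2 t) + -1 * (y2 t * V t + y1 t * v1 t))).
   { apply within_lin; apply within_mul; auto; apply glob_within; auto. }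
   assert (DW2 : deriv_within 0 1 (fun t => 1 * (U t * y1 t) + -1 * (u1 t * y t))
      (fun t => 1 * (u1 t * y1 t + U t * y2 t) + -1 * (u2 t * y t + u1 t * y1 t))).
   { apply within_lin; apply within_mul; auto; apply glob_within; auto. }
   pose proof (within_const 0 1 _ _ ltac:(lra) DW1) as C1.
   pose proof (within_const 0 1 _ _ ltac:(lra) DW2) as C2.
   exists (1 * (y 0 * v1 0) + -1 * (y1 0 * V 0)), (1 * (U 0 * y1 0) + -1 * (u1 0 * y 0)).
   intros t Ht.
   assert (Z1 : forall t, 0 <= t <= 1 -> 1 * (y1 t * v1 t + y t * v2 t) + -1 * (y2 t * V t + y1 t * v1 t) = 0).
   { intros s Hs. assert (Ha : v2 s = - (lam ^ 2 * q s * V s)) by (pose proof (EV s); lra).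
     assert (Hb : y2 s = - (lam ^ 2 * q s * y s)) by (pose proof (Hye s Hs); lra).
     rewrite Ha, Hb. ring. }
   assert (Z2 : forall t, 0 <= t <= 1 -> 1 * (u1 t * y1 t + U t * y2 t) + -1 * (u2 t * y t + u1 t * y1 t) = 0).
   { intros s Hs. assert (Ha : u2 s = - (lam ^ 2 * q s * U s)) by (pose proof (EU s); lra).
     assert (Hb : y2 s = - (lam ^ 2 * q s * y s)) by (pose proof (Hye s Hs); lra).
     rewrite Ha, Hb. ring. }
   specialize (C1 Z1 t Ht). specialize (C2 Z2 t Ht). cbv beta in C1, C2.
   rewrite <- C1, <- C2. specialize (WR t).
   replace (y t) with (y t * (U t * v1 t - u1 t * V t)) at 1 by (rewrite WR; ring). ring.
Qed.
Theorem theorem3p2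
  (lam : R) (Hlam : lam > 0)
  (q q1 q2 : R -> R) (Hqs : smooth q) (Hqpos : forall t, q t > 0)
  (Hq1 : is_deriv q q1) (Hq2 : is_deriv q1 q2)
  (xf : R -> R) (Hx : forall t, RInt_val (fun u => sqrt (q u)) 0 t (xf t))
  (tinv : R -> R) (Htx : forall t, tinv (xf t) = t) (Hxt : forall y, xf (tinv y) = y)
  (t1 t2 t3 : R -> R) (Ht1 : is_deriv tinv t1) (Ht2 : is_deriv t1 t2) (Ht3 : is_deriv t2 t3)
  (p : R -> R) (Hp : forall y, p y = 2 * schwarzian t1 t2 t3 y)
  (sigma : R -> R) (Hsc : continuity sigma) (HsL1 : L1 sigma)
  (delta delta1 : R -> R)
  (Hdelta : forall y, improper_integral
              (fun z => 1 / (4 * lam) * sin (2 * lam * Rabs (y - z)) * sigma z) (delta y))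
  (Hdelta1 : is_deriv delta delta1)
  (Heq : forall y, sigma y = S_op lam delta delta1 y + p y)
  (alpha : R -> R)
  (Halpha : forall t, exists w,
      RInt_val (fun u => sqrt (q u) * exp (delta (xf u) / 2)) 0 t w /\ alpha t = lam * w) :
  (* (1) *)
  (exists d2, is_deriv delta1 d2 /\ continuity d2 /\
     forall y, d2 y - 1 / 4 * (delta1 y) ^ 2 + 4 * lam ^ 2 * (exp (delta y) - 1) = p y) /\
  (* (2) *)
  (exists e1 e2, is_deriv (fun t => delta (xf t)) e1 /\ is_deriv e1 e2 /\ continuity e2 /\
     forall t, e2 t - q1 t / (2 * q t) * e1 t - 1 / 4 * (e1 t) ^ 2
               + 4 * lam ^ 2 * q t * (exp (delta (xf t)) - 1)
             = q t * (1 / q t * (5 / 4 * (q1 t / q t) ^ 2 - q2 t / q t))) /\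
  (* (3) *)
  (exists a1 a2 a3, is_deriv alpha a1 /\ is_deriv a1 a2 /\ is_deriv a2 a3 /\ continuity a3 /\
     forall t, (a1 t) ^ 2 = lam ^ 2 * q t - 1 / 2 * (a3 t / a1 t) + 3 / 4 * (a2 t / a1 t) ^ 2) /\
  (* (4) *)
  phase_function lam q alpha.
Proof.
 assert (Hq0 : forall t, 0 < q t) by (intros; apply Hqpos).
 set (d2 := fun y => sigma y - 4 * lam ^ 2 * delta y).
 assert (Hd2 : is_deriv delta1 d2) by (apply part1; auto).
 assert (Cdelta : forall y, continuity_pt delta y) by (intros; apply (C_of_D _ _ _ (Hdelta1 y))).
 assert (Cd2 : continuity d2) by (intros y; unfold d2; apply C_minus; [apply Hsc| apply C_mul; [apply C_const| apply Cdelta]]).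
 assert (Eq1 : forall y, d2 y - 1 / 4 * (delta1 y) ^ 2 + 4 * lam ^ 2 * (exp (delta y) - 1) = p y).
 { intros y. unfold d2. rewrite Heq. unfold S_op. ring. }
 split. { exists d2. auto. }
 destruct (qfacts q q1 q2 xf tinv t1 t2 t3 Hqpos Hq1 Hq2 Hx Htx Ht1 Ht2 Ht3) as [Dx Pid].
 pose proof (q2cont q q1 q2 Hqs Hq1 Hq2) as Cq2.
 assert (Sp : forall t, 0 < sqrt (q t)) by (intros; apply sqrt_lt_R0; apply Hq0).
 assert (Ss : forall t, sqrt (q t) * sqrt (q t) = q t) by (intros; apply sqrt_sqrt; left; apply Hq0).
 assert (DS : forall u, derivable_pt_lim (fun t => sqrt (q t)) u (/ (2 * sqrt (q u)) * q1 u)).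
 { intros u. apply D_sqrt; auto. }
 assert (Cq1 : forall t, continuity_pt q1 t) by (intros; apply (C_of_D _ _ _ (Hq2 t))).
 assert (CS : forall t, continuity_pt (fun t => sqrt (q t)) t) by (intros; apply (C_of_D _ _ _ (DS t))).
 assert (CxS : forall t, continuity_pt xf t) by (intros; apply (C_of_D _ _ _ (Dx t))).
 set (e1 := fun t => delta1 (xf t) * sqrt (q t)).
 set (e2 := fun t => d2 (xf t) * sqrt (q t) * sqrt (q t) + delta1 (xf t) * (/ (2 * sqrt (q t)) * q1 t)).
 assert (De1 : is_deriv (fun t => delta (xf t)) e1).
 { intros t. unfold e1. apply D_comp; auto. }
 assert (De2 : is_deriv e1 e2).
 { intros t. unfold e1, e2. eapply D_val. { apply D_mul. apply (D_comp xf delta1); auto. apply DS. }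
   cbv beta. ring. }
 assert (Ce2 : continuity e2).
 { intros t. unfold e2. apply C_plus. apply C_mul. apply C_mul. apply C_comp; auto. apply CS. apply CS.
   apply C_mul. apply C_comp; auto. apply (C_of_D _ _ _ (Hd2 _)). apply C_mul; auto.
   apply C_inv. apply C_mul. apply C_const. apply CS. specialize (Sp t). lra. }
 assert (Eq2 : forall t, e2 t - q1 t / (2 * q t) * e1 t - 1 / 4 * (e1 t) ^ 2
               + 4 * lam ^ 2 * q t * (exp (delta (xf t)) - 1)
             = q t * (1 / q t * (5 / 4 * (q1 t / q t) ^ 2 - q2 t / q t))).
 { intros t. rewrite <- Pid, <- Hp, <- Eq1. unfold e1, e2. specialize (Sp t). specialize (Ss t).
   set (s := sqrt (q t)) in *. rewrite <- Ss. field. lra. }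
 split. { exists e1, e2. auto. }
 set (h := fun u => sqrt (q u) * exp (delta (xf u) / 2)).
 assert (Ch : forall u, continuity_pt h u).
 { intros u. unfold h. apply C_mul. apply CS. apply C_exp. unfold Rdiv. apply C_mul.
   apply C_comp; auto. apply C_const. }
 assert (Al : forall t, alpha t = lam * RInt h 0 t).
 { intros t. destruct (Halpha t) as [w [Hw ->]]. f_equal. apply RIv. exact Hw. }
 set (E := fun t => exp (delta (xf t) / 2)).
 assert (Ep : forall t, 0 < E t) by (intros; apply exp_pos).
 assert (DE : forall t, derivable_pt_lim E t (E t * (e1 t * / 2))).
 { intros t. unfold E. apply (D_exp (fun t => delta (xf t) / 2)). unfold Rdiv. eapply D_val. { apply D_mul. apply De1. apply D_const. } cbv beta. ring. }
 assert (CE : forall t, continuity_pt E t) by (intros; apply (C_of_D _ _ _ (DE t))).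
 assert (Ce1 : forall t, continuity_pt e1 t) by (intros; apply (C_of_D _ _ _ (De2 t))).
 set (a1 := fun t => lam * (sqrt (q t) * E t)).
 set (G := fun t => q1 t * / (2 * sqrt (q t)) + sqrt (q t) * e1 t * / 2).
 set (a2 := fun t => lam * (E t * G t)).
 set (G' := fun t => q2 t * / (2 * sqrt (q t)) - q1 t * q1 t * / (4 * (sqrt (q t) * sqrt (q t) * sqrt (q t)))
     + q1 t * e1 t * / (4 * sqrt (q t)) + sqrt (q t) * e2 t * / 2).
 set (a3 := fun t => lam * (E t * (e1 t * / 2) * G t + E t * G' t)).
 assert (DG : forall t, derivable_pt_lim G t (G' t)).
 { intros t. unfold G, G'. eapply D_val.
   { apply D_plus. apply D_mul. apply Hq2. apply (D_inv (fun t => 2 * sqrt (q t))).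
     apply D_mul. apply D_const. apply DS. specialize (Sp t). apply Rgt_not_eq. lra.
     apply D_mul. apply D_mul. apply DS. apply De2. apply D_const. }
   cbv beta. specialize (Sp t). field. lra. }
 assert (Da1 : is_deriv alpha a1).
 { intros t. apply (D_ext (fun t => lam * RInt h 0 t)). { intros; symmetry; apply Al. }
   eapply D_val. { apply D_mul. apply D_const. apply FTC. exact Ch. } unfold a1, h, E. ring. }
 assert (Da2 : is_deriv a1 a2).
 { intros t. unfold a1, a2. eapply D_val. { apply D_mul. apply D_const. apply D_mul. apply DS. apply DE. }
   unfold G. specialize (Sp t). field. lra. }
 assert (Da3 : is_deriv a2 a3).
 { intros t. unfold a2, a3. eapply D_val. { apply D_mul. apply D_const. apply D_mul. apply DE. apply DG. }
   cbv beta. ring. }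
 assert (Ca3 : continuity a3).
 { intros t. unfold a3, G, G'. pose proof (Sp t) as Hs0. assert (Hs1 : sqrt (q t) * sqrt (q t) > 0) by nra.
   repeat first [ apply CE | apply Ce1 | apply Ce2 | apply Cq1 | apply Cq2 | apply CS | apply C_const
     | apply (C_inv (fun t => 2 * sqrt (q t))) | apply (C_inv (fun t => 4 * sqrt (q t)))
     | apply (C_inv (fun t => 4 * (sqrt (q t) * sqrt (q t) * sqrt (q t))))
     | apply C_mul | apply C_minus | apply C_plus | apply C_opp ];
   try (apply Rgt_not_eq; nra). }
 assert (Kum : forall t, (a1 t) ^ 2 = lam ^ 2 * q t - 1 / 2 * (a3 t / a1 t) + 3 / 4 * (a2 t / a1 t) ^ 2).
 { intros t. pose proof (Eq2 t) as H2.
   assert (He2 : e2 t = q t * (1 / q t * (5 / 4 * (q1 t / q t) ^ 2 - q2 t / q t)) + q1 t / (2 * q t) * e1 t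
      + 1 / 4 * (e1 t) ^ 2 - 4 * lam ^ 2 * q t * (exp (delta (xf t)) - 1)) by lra.
   assert (Eexp : exp (delta (xf t)) = E t * E t).
   { unfold E. rewrite <- exp_plus. f_equal. field. }
   unfold a1, a2, a3, G'. rewrite He2, Eexp. unfold G.
   specialize (Sp t). specialize (Ss t). specialize (Ep t).
   set (s := sqrt (q t)) in *. set (EE := E t) in *. rewrite <- Ss.
   field. repeat split; lra. }
 split. { exists a1, a2, a3. auto. }
 apply (phase_generic lam q alpha a1 a2 a3); auto.
 intros t. unfold a1. specialize (Sp t). specialize (Ep t). apply Rmult_gt_0_compat; auto. nra.
Qed.
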